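(* Let $\mathcal{L}=\{S_1,\dots,S_k\}$ be a finite list of integer compositions (finite words over the alphabet of positive integers) such that no word on the list is contained as a subword (block of consecutive letters) in any other word of the list. Suppose further that all correlation polynomials $c_{ij}(x,q)=c_{S_iS_j}(x,q)$ with $i\neq j$ vanish identically. Let \[F(x,q)=\sum_{\sigma}x^{w(\sigma)}q^{\ell(\sigma)},\] the sum being extended over all compositions $\sigma$ of all nonnegative integers (including the empty composition) that avoid every word of $\mathcal{L}$ as a subword, where $\ell(\sigma)$ is the number of parts of $\sigma$ and $w(\sigma)$ is the sum of the parts of $\sigma$. Then, as formal power series, \[F(x,q)=\frac{1}{1-\frac{qx}{1-x}+\sum_{j=1}^{k}\frac{x^{w(S_j)}q^{\ell(S_j)}}{c_{jj}(x,q)}}.\]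
   Context: A composition is regarded as a word $a_1a_2\cdots a_m$ over the alphabet of positive integers; the weight of a letter $u$ is $w(u)=u$ and the weight $w$ of a word is the sum of the weights of its letters; the length $\ell$ is the number of letters. A word $\sigma$ contains $S$ as a subword if $S$ occurs as a block of consecutive letters of $\sigma$; $\sigma$ avoids $S$ otherwise. Correlation: for words $X=a_0a_1\cdots a_{m-1}$ (of length $m$) and $Y$, and $0\le j\le m-1$, put $c_j=1$ if $Y$ has length at least $m-j$ and the prefix $a_0\cdots a_{m-1-j}$ of $X$ equals the suffix of $Y$ of length $m-j$ (i.e. after aligning right ends and shifting $Y$ $j$ places to the left, the overlapping parts agree), and $c_j=0$ otherwise. The correlation polynomial of $X$ on $Y$ is \[c_{XY}(x,q)=c_0+c_1x^{w(a_{m-1})}q+c_2x^{w(a_{m-2}a_{m-1})}q^2+\dots+c_{m-1}x^{w(a_1a_2\cdots a_{m-1})}q^{m-1},\] i.e. $c_{XY}(x,q)=\sum_{j=0}^{m-1}c_j\,x^{w(a_{m-j}\cdots a_{m-1})}q^{j}$. We write $c_{ij}(x,q)=c_{S_iS_j}(x,q)$. *)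

(* Defs.v *)
From mathcomp Require Import all_boot all_order all_algebra.
Set Implicit Arguments. Unset Strict Implicit. Unset Printing Implicit Defensive.
Import GRing.Theory Num.Theory.
Local Open Scope ring_scope.

Definition word := seq nat.
Definition is_comp (s : word) : bool := all (fun a => (0 < a)%N) s.
(* weight w(s) = sum of the letters; length l(s) = size s *)
Definition wt (s : word) : nat := sumn s.
Definition avoids (s : word) (L : seq word) : bool := all (fun S => ~~ infix S s) L.

(* Formal power series in two variables x, q with integer coefficients:
   f n m = coefficient of x^n q^m. *)
Definition ser := nat -> nat -> int.
Definition szero : ser := fun _ _ => 0.
Definition sone : ser := fun n m => ((n == 0%N) && (m == 0%N))%:R.
Definition smono (a b : nat) : ser := fun n m => ((n == a) && (m == b))%:R.
Definition sadd (f g : ser) : ser := fun n m => f n m + g n m.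
Definition sopp (f : ser) : ser := fun n m => - f n m.
Definition ssub (f g : ser) : ser := sadd f (sopp g).
Definition smul (f g : ser) : ser := fun n m =>
  \sum_(i < n.+1) \sum_(j < m.+1) f i j * g (n - i)%N (m - j)%N.
Definition spow (f : ser) (k : nat) : ser := iter k (smul f) sone.
Definition sbig (fs : seq ser) : ser := foldr sadd szero fs.
(* Formal inverse of a series f with constant term 1, as the geometric series
   sum_k (1 - f)^k; since 1 - f has no constant term, only k <= n + m
   contribute to the coefficient of x^n q^m. *)
Definition sinv (f : ser) : ser := fun n m =>
  \sum_(k < (n + m).+1) spow (ssub sone f) k n m.

(* Correlation polynomial c_{XY}(x,q) = sum_{j<m} c_j x^{w(a_{m-j}..a_{m-1})} q^j,
   m = size X, c_j = 1 iff size Y >= m-j and the prefix of X of length m-j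
   equals the suffix of Y of length m-j. *)
Definition corr (X Y : word) : ser :=
  let m := size X in
  sbig [seq (if ((m - j) <= size Y)%N &&
                (take (m - j) X == drop (size Y - (m - j)) Y)
             then smono (wt (drop (m - j) X)) j else szero) | j <- iota 0 m].

(* compositions of n with m parts avoiding L, encoded as m-tuples of 'I_(n+1)
   (every part of a composition of n is at most n) *)
Definition good_tuple (L : seq word) (n m : nat) (t : m.-tuple 'I_n.+1) : bool :=
  let s := map (@nat_of_ord _) t in
  [&& is_comp s, wt s == n & avoids s L].
Definition comps_count (L : seq word) (n m : nat) : nat :=
  #|[pred t : m.-tuple 'I_n.+1 | good_tuple L t]|.
Definition Fgen (L : seq word) : ser := fun n m => (comps_count L n m)%:R.

(* Main.v *)
Require Import Defs.
From mathcomp Require Import all_boot all_order all_algebra.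
From Stdlib Require Import FunctionalExtensionality.
Set Implicit Arguments. Unset Strict Implicit. Unset Printing Implicit Defensive.
Import GRing.Theory Num.Theory.
Local Open Scope ring_scope.

Lemma serE (f g : ser) : (forall n m, f n m = g n m) -> f = g.
Proof. by move=> H; do 2 apply: functional_extensionality => ?; apply: H. Qed.

Lemma sum_rev n (F : nat -> nat -> int) :
  \sum_(i < n.+1) F i (n - i)%N = \sum_(i < n.+1) F (n - i)%N i.
Proof.
rewrite (reindex_inj rev_ord_inj) /=; apply: eq_bigr => i _.
by rewrite subSS subKn // -ltnS.
Qed.

Lemma smulC f g : smul f g = smul g f.
Proof.
apply: serE => n m; rewrite /smul.
rewrite (sum_rev n (fun i i' => \sum_(j < m.+1) f i j * g i' (m - j)%N)).
apply: eq_bigr => i _.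
rewrite (sum_rev m (fun j j' => f (n - i)%N j * g i j')).
by apply: eq_bigr => j _; rewrite mulrC.
Qed.

Lemma triangle n (G : nat -> nat -> nat -> int) :
  \sum_(i < n.+1) \sum_(k < i.+1) G k (i - k)%N (n - i)%N =
  \sum_(k < n.+1) \sum_(l < (n - k).+1) G k l (n - k - l)%N.
Proof.
elim: n G => [|n IH] G.
  by rewrite !big_ord_recl !big_ord0.
rewrite big_ord_recr /=.
transitivity (\sum_(i < n.+1) \sum_(k < i.+1) (fun k l r => G k l r.+1) k (i - k)%N (n - i)%N
   + \sum_(k < n.+2) G k (n.+1 - k)%N 0%N).
  congr (_ + _); last by rewrite subnn.
  by apply: eq_bigr => i _; apply: eq_bigr => k _; rewrite subSn // -ltnS.
rewrite (IH (fun k l r => G k l r.+1)) [in RHS]big_ord_recr /= subnn.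
rewrite big_ord1 sub0n [X in _ + X]big_ord_recr /= subnn addrA; congr (_ + _).
rewrite -big_split /=; apply: eq_bigr => k _.
have Hk : (k <= n)%N by rewrite -ltnS.
rewrite subSn // [in RHS]big_ord_recr /= subnn; congr (_ + _).
apply: eq_bigr => l _; congr (G _ _ _).
have Hl : (l <= n - k)%N by rewrite -ltnS.
by rewrite subSn.
Qed.

Lemma smulA f g h : smul (smul f g) h = smul f (smul g h).
Proof.
apply: serE => n m; rewrite /smul.
transitivity (\sum_(i < n.+1) \sum_(i1 < i.+1) \sum_(j < m.+1) \sum_(j1 < j.+1)
   f i1 j1 * g (i - i1)%N (j - j1)%N * h (n - i)%N (m - j)%N).
  apply: eq_bigr => i _; rewrite exchange_big /=; apply: eq_bigr => j _.
  by rewrite mulr_suml; apply: eq_bigr => i1 _; rewrite mulr_suml.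
transitivity (\sum_(i < n.+1) \sum_(i1 < i.+1)
   (fun a b c => \sum_(j1 < m.+1) \sum_(j2 < (m - j1).+1)
      f a j1 * g b j2 * h c (m - j1 - j2)%N) i1 (i - i1)%N (n - i)%N).
  apply: eq_bigr => i _; apply: eq_bigr => i1 _.
  exact: (triangle m (fun a b c => f i1 a * g (i - i1)%N b * h (n - i)%N c)).
rewrite (triangle n (fun a b c => \sum_(j1 < m.+1) \sum_(j2 < (m - j1).+1)
      f a j1 * g b j2 * h c (m - j1 - j2)%N)); apply: eq_bigr => i1 _.
rewrite exchange_big /=; apply: eq_bigr => j1 _.
rewrite mulr_sumr; apply: eq_bigr => i2 _.
rewrite mulr_sumr; apply: eq_bigr => j2 _.
by rewrite mulrA.
Qed.

Lemma smul1l g : smul sone g = g.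
Proof.
apply: serE => n m; rewrite /smul big_ord_recl [X in _ + X]big1; last first.
  by move=> i _; apply: big1 => j _; rewrite /sone /= mul0r.
rewrite addr0 big_ord_recl [X in _ + X]big1; last first.
  by move=> j _; rewrite /sone /= mul0r.
by rewrite addr0 /sone /= mul1r !subn0.
Qed.

Lemma smul1r g : smul g sone = g.
Proof. by rewrite smulC smul1l. Qed.

Lemma smulDl f g h : smul (sadd f g) h = sadd (smul f h) (smul g h).
Proof.
apply: serE => n m; rewrite /smul /sadd -big_split; apply: eq_bigr => i _.
by rewrite -big_split; apply: eq_bigr => j _; rewrite mulrDl.
Qed.

Lemma smulNl f h : smul (sopp f) h = sopp (smul f h).
Proof.
apply: serE => n m; rewrite /smul /sopp -sumrN; apply: eq_bigr => i _.
by rewrite -sumrN; apply: eq_bigr => j _; rewrite mulNr.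
Qed.

Lemma smulBl f g h : smul (ssub f g) h = ssub (smul f h) (smul g h).
Proof. by rewrite /ssub smulDl smulNl. Qed.

Lemma smul0l h : smul szero h = szero.
Proof.
by apply: serE => n m; rewrite /smul big1 // => i _; rewrite big1 // => j _; rewrite mul0r.
Qed.

Lemma smul_sbig fs h : smul (sbig fs) h = sbig [seq smul f h | f <- fs].
Proof. by elim: fs => [|f fs IH] /=; rewrite ?smul0l // smulDl IH. Qed.

Lemma sbigE fs n m : sbig fs n m = \sum_(f <- fs) f n m.
Proof. by elim: fs => [|f fs IH]; rewrite ?big_nil ?big_cons //= /sadd IH. Qed.

Lemma sum_delta n a (F : nat -> int) :
  \sum_(i < n.+1) ((i == a :> nat)%:R * F i) = if (a <= n)%N then F a else 0.
Proof.
case: ifP => Ha.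
  have Ha' : (a < n.+1)%N by [].
  rewrite (bigD1 (Ordinal Ha')) //= eqxx mul1r big1 ?addr0 // => i Hi.
  suff -> : (i == a :> nat) = false by rewrite mul0r.
  by apply/negbTE; apply: contra Hi => /eqP Hia; apply/eqP/val_inj.
apply: big1 => i _; suff -> : (i == a :> nat) = false by rewrite mul0r.
by apply/negbTE; apply/eqP => Hia; move: (ltn_ord i); rewrite Hia ltnS Ha.
Qed.

Lemma smonoE a b g n m :
  smul (smono a b) g n m = if (a <= n)%N && (b <= m)%N then g (n - a)%N (m - b)%N else 0.
Proof.
rewrite /smul /smono.
transitivity (\sum_(i < n.+1) ((i == a :> nat)%:R *
   \sum_(j < m.+1) ((j == b :> nat)%:R * g (n - i)%N (m - j)%N))).
  apply: eq_bigr => i _; rewrite mulr_sumr; apply: eq_bigr => j _.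
  by rewrite mulrA -natrM mulnb.
rewrite (sum_delta n a (fun i => \sum_(j < m.+1) ((j == b :> nat)%:R * g (n - i)%N (m - j)%N))).
rewrite (sum_delta m b (fun j => g (n - a)%N (m - j)%N)).
by case: (a <= n)%N; case: (b <= m)%N.
Qed.

Lemma smono_mul a b c d : smul (smono a b) (smono c d) = smono (a + c) (b + d).
Proof.
apply: serE => n m; rewrite smonoE /smono.
case: (leqP a n) => Ha /=; last first.
  have -> : (n == a + c)%N = false by apply/negbTE; rewrite neq_ltn (leq_trans Ha) // leq_addr.
  done.
case: (leqP b m) => Hb /=; last first.
  have -> : (m == b + d)%N = false by apply/negbTE; rewrite neq_ltn (leq_trans Hb) // leq_addr.
  by rewrite andbF.
congr (_ %:R); congr (_ && _); apply/eqP/eqP => [<-|->]; rewrite ?subnKC ?addKn //.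
Qed.

From mathcomp Require Import zify ring.

Lemma spowS h k : spow h k.+1 = smul h (spow h k).
Proof. by []. Qed.

Lemma spow_hi h : h 0%N 0%N = 0 -> forall k n m, (n + m < k)%N -> spow h k n m = 0.
Proof.
move=> h0; elim=> [|k IH] n m //= Hk.
rewrite /smul big1 // => i _; rewrite big1 // => j _.
case: (posnP i) => Hi; case: (posnP j) => Hj.
- by rewrite Hi Hj h0 mul0r.
- rewrite IH ?mulr0 //; have := ltn_ord i; have := ltn_ord j; lia.
- rewrite IH ?mulr0 //; have := ltn_ord i; have := ltn_ord j; lia.
- rewrite IH ?mulr0 //; have := ltn_ord i; have := ltn_ord j; lia.
Qed.

Lemma smul_local f g g' n m :
  (forall i j, (i <= n)%N -> (j <= m)%N -> g i j = g' i j) ->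
  smul f g n m = smul f g' n m.
Proof.
move=> H; rewrite /smul; apply: eq_bigr => i _; apply: eq_bigr => j _.
by rewrite H // leq_subr.
Qed.

Lemma smul_sumr f K (G : nat -> ser) n m :
  smul f (fun a b => \sum_(k < K) G k a b) n m = \sum_(k < K) smul f (G k) n m.
Proof.
rewrite /smul.
transitivity (\sum_(i < n.+1) \sum_(k < K) \sum_(j < m.+1) f i j * G k (n - i)%N (m - j)%N).
  apply: eq_bigr => i _; rewrite exchange_big /=; apply: eq_bigr => j _.
  by rewrite mulr_sumr.
by rewrite exchange_big.
Qed.

Lemma smul_sinv f : f 0%N 0%N = 1 -> smul f (sinv f) = sone.
Proof.
move=> f0; set h := ssub sone f.
have h0 : h 0%N 0%N = 0 by rewrite /h /ssub /sadd /sopp /sone f0 subrr.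
have fE : f = ssub sone h.
  by apply: serE => a b; rewrite /h /ssub /sadd /sopp opprD opprK addrA subrr add0r.
apply: serE => n m.
rewrite (@smul_local f (sinv f) (fun a b => \sum_(k < (n + m).+1) spow h k a b)); last first.
  move=> i j Hi Hj; rewrite /sinv -/h.
  rewrite (big_ord_widen (n + m).+1 (fun k => spow h k i j)) ?ltnS ?leq_add //.
  rewrite big_mkcond /=; apply: eq_bigr => k _; case: ifP => // Hk.
  by rewrite spow_hi // ltnNge -ltnS Hk.
rewrite smul_sumr.
transitivity (\sum_(k < (n + m).+1) (spow h k n m - spow h k.+1 n m)).
  apply: eq_bigr => k _; rewrite {1}fE smulBl smul1l spowS.
  by rewrite /ssub /sadd /sopp.
rewrite sumrB big_ord_recl [X in _ - X]big_ord_recr /=.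
rewrite -spowS (@spow_hi h h0 (n + m).+1) // addr0.
by under eq_bigr do rewrite add0n; rewrite addrK.
Qed.

Lemma sinv_unique g f : f 0%N 0%N = 1 -> smul g f = sone -> g = sinv f.
Proof.
move=> f0 H.
by rewrite -[g]smul1r -(smul_sinv f0) -smulA H smul1l.
Qed.

Lemma sdiv_unique g f k : f 0%N 0%N = 1 -> smul g f = k -> g = smul k (sinv f).
Proof.
move=> f0 H.
by rewrite -[g]smul1r -(smul_sinv f0) -smulA H.
Qed.

Definition Aser : ser := fun n m => ((0 < n)%N && (m == 1%N))%:R.

Lemma Aser_eq :
  smul (smul (smono 0 1) (smono 1 0)) (sinv (ssub sone (smono 1 0))) = Aser.
Proof.
symmetry; apply: sdiv_unique; first by [].
rewrite smono_mul /= smulC /ssub smulDl smul1l smulNl.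
apply: serE => n m; rewrite /sadd /sopp smonoE /Aser /smono /=.
by case: n => [|[|n]] /=; rewrite ?subr0 ?subn0 ?addn0 ?subrr.
Qed.

Definition W (n m : nat) : seq word :=
  [seq z <- [seq map (@nat_of_ord n.+1) (tval t) | t <- enum (predT : pred (m.-tuple 'I_n.+1))]
     | is_comp z && (wt z == n)].

Lemma W_uniq n m : uniq (W n m).
Proof.
apply: filter_uniq; rewrite map_inj_uniq ?enum_uniq //.
by move=> t1 t2 /(inj_map val_inj) /val_inj.
Qed.

Lemma le_sumn (a : nat) (z : word) : a \in z -> (a <= sumn z)%N.
Proof.
elim: z => [|b z IH] //=; rewrite in_cons => /orP[/eqP->|/IH H].
  by rewrite leq_addr.
by rewrite (leq_trans H) // leq_addl.
Qed.

Lemma memW n m z : (z \in W n m) = [&& is_comp z, wt z == n & size z == m].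
Proof.
rewrite mem_filter; apply/andP/and3P => [[/andP[Hc Hw] /mapP[t _ Hz]]|[Hc Hw Hs]].
  by split => //; rewrite Hz size_map size_tuple.
split; first by rewrite Hc.
have Hs' : size (map (@inord n) z) == m by rewrite size_map.
apply/mapP; exists (Tuple Hs'); first by rewrite mem_enum.
rewrite /= -map_comp map_id_in // => a Ha /=; rewrite inordK // ltnS.
by rewrite -(eqP Hw) le_sumn.
Qed.

Definition gf (P : word -> bool) : ser := fun n m => \sum_(z <- W n m) (P z)%:R.

Lemma Fgen_gf L : Fgen L = gf (fun z => avoids z L).
Proof.
apply: serE => n m; rewrite /Fgen /gf /comps_count /W big_filter big_map.
rewrite big_enum_cond /= -sum1_card natr_sum big_mkcond /= [in RHS]big_mkcond /=.
apply: eq_bigr => t _; rewrite /good_tuple inE.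
by case: (is_comp _) => //=; case: (wt _ == n) => //=; case: (avoids _ _).
Qed.

Lemma catr_inj (r : word) : injective (fun u : word => u ++ r).
Proof.
move=> u1 u2 /= H; have Hs : size u1 = size u2.
  by move/(congr1 size): H; rewrite !size_cat => /addIn.
by move/eqP: H; rewrite eqseq_cat // => /andP[/eqP].
Qed.

Lemma comp_cat u v : is_comp (u ++ v) = is_comp u && is_comp v.
Proof. by rewrite /is_comp all_cat. Qed.

Lemma wt_cat u v : wt (u ++ v) = (wt u + wt v)%N.
Proof. by rewrite /wt sumn_cat. Qed.

Lemma suffix_split r (f : word -> int) n m : is_comp r ->
  smul (smono (wt r) (size r)) (fun a b => \sum_(u <- W a b) f u) n m =
  \sum_(z <- W n m) (suffix r z)%:R * f (take (m - size r) z).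
Proof.
move=> Hr; rewrite smonoE.
transitivity (\sum_(z <- W n m | suffix r z) f (take (m - size r) z)); last first.
  by rewrite big_mkcond; apply: eq_bigr => z _; case: (suffix r z); rewrite ?mul1r ?mul0r.
case: ifP => [/andP[Hw Hs]|Hn].
  symmetry; rewrite -big_filter.
  rewrite (perm_big (map (fun u => u ++ r) (W (n - wt r) (m - size r)))); last first.
    apply: uniq_perm; first exact: filter_uniq (W_uniq _ _).
      by rewrite map_inj_uniq ?W_uniq //; apply: catr_inj.
    move=> z; rewrite mem_filter memW; apply/idP/mapP.
      case/and4P => Hsuf; case: (suffixP Hsuf) => u ->; rewrite comp_cat wt_cat size_cat.
      case/andP=> Hu _ /eqP Hwu /eqP Hsu; exists u => //.
      by rewrite memW Hu -Hwu -Hsu !addnK !eqxx.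
    case=> u; rewrite memW => /and3P[Hu /eqP Hwu /eqP Hsu] ->.
    rewrite suffix_suffix comp_cat wt_cat size_cat Hu Hr Hwu Hsu !subnK //.
    by rewrite !eqxx.
  rewrite big_map big_seq [RHS]big_seq; apply: eq_bigr => u.
  by rewrite memW => /and3P[_ _ /eqP Hsu]; rewrite take_size_cat.
rewrite big1_seq // => z /andP[Hsuf]; case: (suffixP Hsuf) => u Hz; rewrite memW Hz.
rewrite comp_cat wt_cat size_cat => /and3P[_ /eqP Hwu /eqP Hsu].
by move: Hn; rewrite -Hwu -Hsu !leq_addl.
Qed.

Lemma suffix_cmp (a b z : word) :
  suffix a z -> suffix b z -> (size a <= size b)%N -> suffix a b.
Proof.
rewrite -!prefix_rev !prefixE !size_rev => /eqP Ha /eqP Hb Hs.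
by rewrite -[in X in take _ X]Hb take_takel ?size_rev // Ha.
Qed.

Lemma suffix_dropE (r z : word) : suffix r z -> drop (size z - size r) z = r.
Proof. by rewrite suffixE => /eqP. Qed.

Lemma avoids_infix (u z : word) L : infix u z -> avoids z L -> avoids u L.
Proof.
move=> Huz /allP H; apply/allP => s Hs; apply: contra (H s Hs) => Hsu.
exact: infix_trans Hsu Huz.
Qed.

Lemma avoids_take k k' (z : word) L : (k <= k')%N -> avoids (take k' z) L -> avoids (take k z) L.
Proof.
move=> Hk; apply: avoids_infix; rewrite -(take_takel z Hk); exact: infix_take.
Qed.

Lemma avoids_nil L : all (fun s => s != [::]) L -> avoids [::] L.
Proof.
by move=> /allP H; apply/allP => s Hs; rewrite infixs0 H.
Qed.

Lemma not_avoids (s z : word) L : s \in L -> infix s z -> ~~ avoids z L.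
Proof. by move=> HsL Hi; apply/negP => /allP /(_ s HsL); rewrite Hi. Qed.

Lemma avoids_rcons (z : word) a L : avoids z L -> ~~ avoids (rcons z a) L ->
  exists2 s, s \in L & suffix s (rcons z a).
Proof.
move=> Hz; case/allPn => s Hs; rewrite negbK infix_rconsl => /orP[H|H].
  by exists s.
by move: (allP Hz s Hs); rewrite H.
Qed.

Definition ccond (X Y : word) (j : nat) : bool :=
  ((size X - j) <= size Y)%N && (take (size X - j) X == drop (size Y - (size X - j)) Y).

Lemma corr_smul (X Y : word) (G : ser) n m :
  smul G (corr X Y) n m =
  \sum_(j <- iota 0 (size X)) (ccond X Y j)%:R * smul (smono (wt (drop (size X - j) X)) j) G n m.
Proof.
rewrite smulC /corr smul_sbig sbigE -map_comp big_map; apply: eq_bigr => j _ /=.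
rewrite /ccond; case: ifP => _; rewrite ?mul1r ?mul0r //.
by rewrite smul0l.
Qed.

Lemma corr_coef (X Y : word) j : (j < size X)%N ->
  corr X Y (wt (drop (size X - j) X)) j = (ccond X Y j)%:R.
Proof.
move=> Hj; rewrite /corr sbigE big_map.
rewrite (bigD1_seq j) ?mem_iota ?iota_uniq //= big1 ?addr0.
  by rewrite /ccond; case: ifP => _; rewrite /smono /szero ?eqxx.
move=> j' Hj'; case: ifP => _ //; rewrite /smono.
by rewrite [j == j']eq_sym (negbTE Hj') andbF.
Qed.

Definition Lgood (L : seq word) : Prop :=
  [/\ all is_comp L, all (fun s => s != [::]) L, uniq L,
      (forall s s', s \in L -> s' \in L -> s != s' -> ~~ infix s s') &
      (forall s s', s \in L -> s' \in L -> s != s' -> forall j, (j < size s)%N ->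
         ~~ ccond s s' j)].

Lemma Lgood_intro (L : seq word) :
  all is_comp L ->
  all (fun s => s != [::]) L ->
  (forall i j : nat, (i < size L)%N -> (j < size L)%N -> i != j ->
     ~~ infix (nth [::] L i) (nth [::] L j)) ->
  (forall i j : nat, (i < size L)%N -> (j < size L)%N -> i != j ->
     forall n m : nat, corr (nth [::] L i) (nth [::] L j) n m = 0) ->
  Lgood L.
Proof.
move=> HC HN HI HK.
have HU : uniq L.
  case Hu: (uniq L) => //; move/negbT: Hu => /(uniqPn [::]) [i [j [Hij Hj Heq]]].
  have := HI i j (ltn_trans Hij Hj) Hj (negbT (ltn_eqF Hij)).
  by rewrite Heq infix_refl.
have Hidx : forall s s', s \in L -> s' \in L -> s != s' -> index s L != index s' L.
  move=> s s' Hs Hs' Hne; apply: contra Hne => /eqP Hi.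
  by rewrite -(nth_index [::] Hs) Hi nth_index.
split => //.
  move=> s s' Hs Hs' Hne.
  have Hs1 : (index s L < size L)%N by rewrite index_mem.
  have Hs2 : (index s' L < size L)%N by rewrite index_mem.
  by have := HI _ _ Hs1 Hs2 (Hidx _ _ Hs Hs' Hne); rewrite !nth_index.
move=> s s' Hs Hs' Hne j Hj.
have Hs1 : (index s L < size L)%N by rewrite index_mem.
have Hs2 : (index s' L < size L)%N by rewrite index_mem.
have := HK _ _ Hs1 Hs2 (Hidx _ _ Hs Hs' Hne) (wt (drop (size s - j) s)) j.
rewrite !nth_index // corr_coef //.
by case: (ccond s s' j).
Qed.

Definition gs (L : seq word) (s z : word) : bool :=
  suffix s z && avoids (take (size z).-1 z) L.

Lemma suffix_uniqL L s s' z : Lgood L -> s \in L -> s' \in L ->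
  suffix s z -> suffix s' z -> s = s'.
Proof.
case=> HC HN HU HI HK Hs Hs' H1 H2; apply/eqP; apply/negPn/negP => Hne.
case: (leqP (size s) (size s')) => Hle.
  by move: (HI _ _ Hs Hs' Hne); rewrite suffixW // (suffix_cmp H1 H2 Hle).
move: (HI _ _ Hs' Hs); rewrite eq_sym => /(_ Hne).
by rewrite suffixW // (suffix_cmp H2 H1 (ltnW Hle)).
Qed.

Lemma point1 L (z : word) : Lgood L ->
  ((z != [::])%:R * (avoids (take (size z).-1 z) L)%:R : int) =
  (avoids z L)%:R - (z == [::])%:R + \sum_(s <- L) (gs L s z)%:R.
Proof.
move=> HL; have [HC HN HU HI HK] := HL.
case: (lastP z) => [|z' a].
  rewrite /= avoids_nil // mul0r subrr add0r big1_seq // => s /andP[_ Hs].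
  by rewrite /gs suffixs0 (negbTE (allP HN s Hs)).
have Hrc : rcons z' a != [::] by case: (z').
have Ht : take (size (rcons z' a)).-1 (rcons z' a) = z'.
  by rewrite size_rcons /= -cats1 take_size_cat.
rewrite Hrc (negbTE Hrc) Ht mul1r subr0.
under eq_bigr do rewrite /gs Ht.
case Hz': (avoids z' L); last first.
  have -> : avoids (rcons z' a) L = false.
    by apply/negbTE/negP => /(avoids_infix (infix_rcons z' a)); rewrite Hz'.
  by rewrite big1 // => s _; rewrite andbF.
case Hz: (avoids (rcons z' a) L).
  rewrite big1_seq ?addr0 // => s /andP[_ Hs]; rewrite andbT.
  case Hsuf: (suffix s (rcons z' a)) => //.
  by move: Hz; rewrite (negbTE (not_avoids Hs (suffixW Hsuf))).
have [s0 Hs0 Hsuf0] := avoids_rcons Hz' (negbT Hz).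
rewrite (bigD1_seq s0) //= Hsuf0 big1_seq ?addr0 ?add0r // => s /andP[Hne Hs].
rewrite andbT; case Hsuf: (suffix s (rcons z' a)) => //.
by move: Hne; rewrite (suffix_uniqL HL Hs Hs0 Hsuf Hsuf0) eqxx.
Qed.

Definition Tj L (s z : word) j : bool :=
  [&& ccond s s j, suffix (drop (size s - j) s) z & gs L s (take (size z - j) z)].

Lemma size_suffix (a b : word) : suffix a b -> (size a <= size b)%N.
Proof. by move/suffixW/size_infix. Qed.

Lemma TjA L s z j : Lgood L -> s \in L -> (j < size s)%N -> Tj L s z j ->
  suffix s z && avoids (take (size z - size s) z) L.
Proof.
move=> HL Hs Hj /and3P[Hc Hd /andP[Hs1 Hav]].
have Hsz : (size s <= size z - j)%N.
  by have := size_suffix Hs1; rewrite size_takel // leq_subr.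
rewrite size_takel ?leq_subr // take_takel ?leq_pred // in Hav.
apply/andP; split; last first.
  apply: avoids_take Hav; clear -Hj Hsz; lia.
have Hdz : drop (size z - j) z = drop (size s - j) s.
  by have := suffix_dropE Hd; rewrite size_drop (subKn (ltnW Hj)).
case/suffixP: Hs1 => v Hv.
have Hct := cat_take_drop (size z - j) z.
rewrite Hv Hdz in Hct.
move: Hc; rewrite /ccond (subKn (ltnW Hj)) leq_subr /= => /eqP Hc.
have Es : s ++ drop (size s - j) s = take j s ++ s.
  by rewrite -{1}(cat_take_drop j s) -Hc -catA cat_take_drop.
by apply/suffixP; exists (v ++ take j s); rewrite -Hct -!catA Es.
Qed.


Lemma TjB L s z : Lgood L -> s \in L -> suffix s z ->
  avoids (take (size z - size s) z) L ->
  exists j0, (j0 < size s)%N /\ (forall j, (j < size s)%N -> Tj L s z j = (j == j0)).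
Proof.
move=> HL Hs Hsuf Hu; have [HC HN HU HI HK] := HL.
have Hsne : s != [::] := allP HN s Hs.
have Hls : (0 < size s)%N by case: (s) Hsne.
case/suffixP: Hsuf => u Hz; subst z.
rewrite size_cat addnK take_size_cat // in Hu.
have exP : exists p, ~~ avoids (take p (u ++ s)) L.
  exists (size (u ++ s)); rewrite take_size; apply: (not_avoids Hs).
  exact: suffix_infix.
case: (ex_minnP exP) => p Hp Hmin.
have Hpu : (size u < p)%N.
  rewrite ltnNge; apply/negP => Hle; move: Hp.
  by rewrite (avoids_take Hle) // take_size_cat.
have Hpz : (p <= size u + size s)%N.
  rewrite -size_cat; apply: Hmin; rewrite take_size; apply: (not_avoids Hs).
  exact: suffix_infix.
have Hp1 : avoids (take p.-1 (u ++ s)) L.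
  case Ha: (avoids _ _) => //; have := Hmin _ (negbT Ha).
  by case: (p) Hpu => //= p' _; rewrite ltnn.
have [s' Hs' Hsuf'] : exists2 s', s' \in L & suffix s' (take p (u ++ s)).
  have Hp0 : (0 < p)%N by clear -Hpu; lia.
  have Hps : (p.-1 < size (u ++ s))%N by rewrite size_cat; clear -Hpu Hpz; lia.
  have E := take_nth 0%N Hps; rewrite prednK // in E.
  by rewrite E; apply: avoids_rcons Hp1 _; rewrite -E.
have Htp : take p (u ++ s) = u ++ take (p - size u) s.
  by rewrite take_cat ltnNge (ltnW Hpu).
set k := (p - size u)%N in Htp.
have Hk0 : (0 < k)%N by rewrite /k subn_gt0.
have Hkl : (k <= size s)%N by rewrite /k leq_subLR.
have Htk : size (take k s) = k by rewrite size_takel.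
have Hk1 : suffix (take k s) (take p (u ++ s)) by rewrite Htp suffix_suffix.
have Hss' : s' = s.
  apply/eqP; apply/negPn/negP => Hne.
  case: (leqP (size s') k) => Hle.
    have H1 : suffix s' (take k s).
      by apply: (suffix_cmp Hsuf' Hk1); rewrite Htk.
    by move: (HI _ _ Hs' Hs Hne); rewrite (infix_trans (suffixW H1) (infix_take _ _)).
  have H1 : suffix (take k s) s'.
    by apply: (suffix_cmp Hk1 Hsuf'); rewrite Htk ltnW.
  have Hd := suffix_dropE H1; rewrite Htk in Hd.
  have Hjk : (size s - k < size s)%N by clear -Hk0 Hkl; lia.
  have Hne' : s != s' by rewrite eq_sym.
  have := HK _ _ Hs Hs' Hne' _ Hjk.
  by rewrite /ccond (subKn Hkl) (ltnW Hle) Hd eqxx.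
rewrite Hss' in Hsuf'.
have Hks : suffix (take k s) s.
  by apply: (suffix_cmp Hk1 Hsuf'); rewrite Htk.
have Hdk := suffix_dropE Hks; rewrite Htk in Hdk.
exists (size s - k)%N; split; first by clear -Hk0 Hkl; lia.
move=> j Hj; apply/idP/eqP.
  case/and3P=> _ _ /andP[Hg1 Hg2].
  have Hnav := not_avoids Hs (suffixW Hg1).
  have Hle1 := Hmin _ Hnav.
  rewrite size_takel ?leq_subr // take_takel ?leq_pred // in Hg2.
  have Hle2 : ((size (u ++ s) - j).-1 < p)%N.
    rewrite ltnNge; apply/negP => Hle; move: Hp; rewrite (avoids_take Hle) //.
  rewrite size_cat in Hle1 Hle2; rewrite /k.
  clear -Hle1 Hle2 Hj Hpu Hpz; lia.
move=> ->; apply/and3P; split.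
- by rewrite /ccond (subKn Hkl) Hkl Hdk eqxx.
- exact: suffix_trans (suffix_drop _ _) (suffix_suffix _ _).
- have -> : (size (u ++ s) - (size s - k))%N = p.
    rewrite size_cat /k; clear -Hpu Hpz; lia.
  apply/andP; split => //.
  by rewrite size_takel ?size_cat // take_takel ?leq_pred.
Qed.


Lemma point2 L s z : Lgood L -> s \in L ->
  ((suffix s z && avoids (take (size z - size s) z) L)%:R : int) =
  \sum_(j <- iota 0 (size s)) (Tj L s z j)%:R.
Proof.
move=> HL Hs; case H: (suffix s z && _).
  have [j0 [Hj0 HT]] := TjB HL Hs (andP H).1 (andP H).2.
  rewrite (bigD1_seq j0) ?mem_iota ?iota_uniq //= HT // eqxx big1_seq ?addr0 //.
  move=> j /andP[Hne]; rewrite mem_iota add0n => /andP[_ Hj].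
  by rewrite HT // (negbTE Hne).
rewrite big1_seq // => j; rewrite mem_iota add0n => /andP[_ Hj].
case HTj: (Tj L s z j) => //.
by have := TjA HL Hs Hj HTj; rewrite H.
Qed.

Lemma smulDr f g h : smul f (sadd g h) = sadd (smul f g) (smul f h).
Proof. by rewrite smulC smulDl !(smulC f). Qed.

Lemma smulBr f g h : smul f (ssub g h) = ssub (smul f g) (smul f h).
Proof. by rewrite smulC smulBl !(smulC f). Qed.

Lemma smul_sbigr f fs : smul f (sbig fs) = sbig [seq smul f g | g <- fs].
Proof. by rewrite smulC smul_sbig; congr sbig; apply: eq_map => g; rewrite smulC. Qed.

Lemma comp_drop k (s : word) : is_comp s -> is_comp (drop k s).
Proof. by rewrite -{1}(cat_take_drop k s) comp_cat => /andP[]. Qed.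

Lemma identity2 L s : Lgood L -> s \in L ->
  smul (gf (fun z => avoids z L)) (smono (wt s) (size s)) = smul (gf (gs L s)) (corr s s).
Proof.
move=> HL Hs; have [HC HN HU HI HK] := HL.
have Hcs : is_comp s := allP HC s Hs.
apply: serE => n m; rewrite smulC /gf suffix_split // corr_smul.
symmetry; transitivity (\sum_(j <- iota 0 (size s)) ((ccond s s j)%:R : int) *
  \sum_(z <- W n m) (suffix (drop (size s - j) s) z)%:R * (gs L s (take (m - j) z))%:R).
  rewrite big_seq [RHS]big_seq; apply: eq_bigr => j.
  rewrite mem_iota add0n => /andP[_ Hj].
  have Hsz : size (drop (size s - j) s) = j by rewrite size_drop subKn // ltnW.
  congr (_ * _); rewrite -{2}Hsz -[in RHS]Hsz suffix_split ?comp_drop //.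
  by rewrite Hsz.
rewrite (eq_bigr (fun j => \sum_(z <- W n m) ((ccond s s j)%:R : int) *
  ((suffix (drop (size s - j) s) z)%:R * (gs L s (take (m - j) z))%:R))); last first.
  by move=> j _; rewrite mulr_sumr.
rewrite exchange_big /= big_seq [RHS]big_seq; apply: eq_bigr => z.
rewrite memW => /and3P[_ _ /eqP Hsz]; subst m.
rewrite -natrM mulnb (point2 z HL Hs); apply: eq_bigr => j _.
by rewrite /Tj -!natrM !mulnb andbA.
Qed.

Lemma sum_nil n m : \sum_(z <- W n m) ((z == [::])%:R : int) = sone n m.
Proof.
case Hn: ([::] \in W n m).
  rewrite (bigD1_seq [::]) ?W_uniq //= big1_seq ?addr0; last first.
    by move=> z /andP[Hz _]; rewrite (negbTE Hz).
  by move: Hn; rewrite memW /sone /= => /andP[/eqP<- /eqP<-].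
rewrite big1_seq; last first.
  by move=> z /andP[_ Hz]; case: eqP => // Ez; move: Hn; rewrite -Ez Hz.
by move: Hn; rewrite memW /sone /= eq_sym [0%N == m]eq_sym => ->.
Qed.

Lemma sum_last n (z : word) : is_comp z -> wt z = n ->
  \sum_(i < n.+1) ((0 < i)%N%:R * ((suffix [:: nat_of_ord i] z)%:R : int)) = (z != [::])%:R.
Proof.
move=> Hc Hw; case: (lastP z) Hc Hw => [|z' a] Hc Hw.
  by rewrite big1 // => i _; rewrite suffixs0 mulr0.
have Ha : a \in rcons z' a by rewrite mem_rcons mem_head.
transitivity (\sum_(i < n.+1) ((i == a :> nat)%:R * ((0 < i)%N%:R : int))).
  apply: eq_bigr => i _; rewrite mulrC.
  by rewrite -[[:: nat_of_ord i]]/(rcons [::] (nat_of_ord i)) suffix_rcons suffix0s andbT.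
rewrite (sum_delta n a (fun i => ((0 < i)%N%:R : int))).
rewrite -Hw le_sumn //= (allP Hc a Ha).
by case: (z').
Qed.

Lemma identity1 L : Lgood L ->
  smul (gf (fun z => avoids z L)) Aser =
  sadd (ssub (gf (fun z => avoids z L)) sone) (sbig [seq gf (gs L s) | s <- L]).
Proof.
move=> HL; apply: serE => n m; rewrite smulC /smul.
transitivity (\sum_(i < n.+1) ((0 < i)%N%:R *
    smul (smono (wt [:: nat_of_ord i]) (size [:: nat_of_ord i])) (fun a b => \sum_(u <- W a b) (avoids u L)%:R) n m)).
  apply: eq_bigr => i _; rewrite smonoE /wt /= addn0.
  have -> : (i <= n)%N by rewrite -ltnS ltn_ord.
  rewrite (eq_bigr (fun j : 'I_m.+1 => (0 < i)%N%:R * ((j == 1%N :> nat)%:R * gf (fun z => avoids z L) (n - i)%N (m - j)%N))); last first.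
    by move=> j _; rewrite /Aser mulrA -natrM mulnb.
  rewrite -mulr_sumr (sum_delta m 1 (fun j => gf (fun z => avoids z L) (n - i)%N (m - j)%N)).
  by rewrite /gf; case: (1 <= m)%N.
transitivity (\sum_(z <- W n m) (avoids (take (m - 1) z) L)%:R *
   \sum_(i < n.+1) ((0 < i)%N%:R * ((suffix [:: nat_of_ord i] z)%:R : int))).
  transitivity (\sum_(i < n.+1) \sum_(z <- W n m) ((0 < i)%N%:R *
     ((suffix [:: nat_of_ord i] z)%:R * (avoids (take (m - 1) z) L)%:R) : int)).
    apply: eq_bigr => i _; rewrite -mulr_sumr; case: (posnP i) => [->|Hi].
      by rewrite !mul0r.
    by rewrite suffix_split // /is_comp /= Hi.
  rewrite exchange_big /=; apply: eq_bigr => z _; rewrite mulr_sumr.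
  by apply: eq_bigr => i _; rewrite mulrA mulrC.
rewrite big_seq.
rewrite (eq_bigr (fun z => (avoids z L)%:R - (z == [::])%:R + \sum_(s <- L) (gs L s z)%:R)); last first.
  move=> z; rewrite memW => /and3P[Hc /eqP Hw /eqP Hs].
  by rewrite sum_last // mulrC -point1 // -Hs subn1.
rewrite -big_seq !big_split /= sumrN sum_nil /sadd /ssub /sadd /sopp sbigE big_map.
by rewrite exchange_big.
Qed.

Lemma corr00 (s : word) : s != [::] -> corr s s 0%N 0%N = 1.
Proof.
move=> Hs; have Hl : (0 < size s)%N by case: (s) Hs.
have := corr_coef s Hl; rewrite subn0 drop_size /wt /= => ->.
by rewrite /ccond subn0 leqnn take_size subnn drop0 eqxx.
Qed.

Unset Implicit Arguments.

Theorem theorem2 (L : seq word) :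
  all is_comp L ->
  all (fun s => s != [::]) L ->
  (forall i j : nat, (i < size L)%N -> (j < size L)%N -> i != j ->
     ~~ infix (nth [::] L i) (nth [::] L j)) ->
  (forall i j : nat, (i < size L)%N -> (j < size L)%N -> i != j ->
     forall n m : nat, corr (nth [::] L i) (nth [::] L j) n m = 0) ->
  forall n m : nat,
    Fgen L n m =
    sinv (sadd (ssub sone (smul (smul (smono 0 1) (smono 1 0))
                                (sinv (ssub sone (smono 1 0)))))
               (sbig [seq smul (smono (wt s) (size s)) (sinv (corr s s)) | s <- L]))
         n m.
Proof.
move=> HC HN HI HK n m.
have HL := Lgood_intro HC HN HI HK.
rewrite Aser_eq Fgen_gf; congr (_ n m).
set F := gf (fun z => avoids z L).
apply: sinv_unique.
  rewrite /sadd /ssub /sadd /sopp /sone /Aser /= subr0 sbigE big_map big1_seq ?addr0 //.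
  move=> s /andP[_ Hs]; rewrite smonoE leqn0 [(size s <= 0)%N]leqn0 size_eq0.
  by rewrite (negbTE (allP HN s Hs)) andbF.
rewrite smulDr smulBr smul1r identity1 // smul_sbigr.
have E2 : forall s, s \in L ->
    smul F (smul (smono (wt s) (size s)) (sinv (corr s s))) = gf (gs L s).
  move=> s Hs; rewrite -smulA identity2 // smulA smul_sinv ?smul1r //.
  exact: corr00 (allP HN s Hs).
rewrite -map_comp.
have -> : [seq (smul F \o (fun s => smul (smono (wt s) (size s)) (sinv (corr s s)))) s | s <- L]
   = [seq gf (gs L s) | s <- L] by apply/eq_in_map => s Hs /=; apply: E2.
apply: serE => a b; rewrite /sadd /ssub /sadd /sopp.
ring.
Qed.
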